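(* For every positive integer $n$, there exists a set $P$ of $n$ distinct points in the Euclidean plane $\mathbb{R}^2$ and $\lfloor n/4\rfloor$ distinct positive real numbers $d_1,\dots,d_{\lfloor n/4\rfloor}$ such that for each $j$, the number of unordered pairs $\{p,q\}\subset P$ with $p\neq q$ and $\|p-q\|=d_j$ is at least $n+1$.
   Context: A distance $d$ ''occurs $t$ times'' in a finite point set $P\subset\mathbb{R}^2$ if exactly $t$ unordered pairs of distinct points of $P$ are at Euclidean distance $d$. When $\lfloor n/4\rfloor=0$ the statement is vacuous. *)

(* Defs.v *)
From Stdlib Require Import Reals.
From mathcomp Require Import all_boot.
From mathcomp Require Import Rstruct.

Set Implicit Arguments.
Unset Strict Implicit.
Unset Printing Implicit Defensive.

Definition point := (R * R)%type.

Definition dist2 (p q : point) : R :=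
  sqrt (Rsqr (fst p - fst q)%R + Rsqr (snd p - snd q)%R)%R.

(* Number of unordered pairs {P i, P j} (i < j) at distance d, for a point
   family P : 'I_n -> point.  When P is injective these are exactly the
   unordered pairs of distinct points of the set {P i}. *)
Definition occ (n : nat) (P : 'I_n -> point) (d : R) : nat :=
  #|[set ij : 'I_n * 'I_n | (ij.1 < ij.2)%N && (dist2 (P ij.1) (P ij.2) == d)]|.

(* Main.v *)
Require Import Defs.
From Stdlib Require Import Reals.
From mathcomp Require Import all_boot.
From mathcomp Require Import Rstruct.
From Stdlib Require Import Lra Lia Psatz.
From mathcomp Require Import zify.

Set Implicit Arguments.
Unset Strict Implicit.
Local Open Scope R_scope.

Definition th (N : nat) : R := 2 * PI / INR N.
Definition hh (N : nat) : R := PI / INR N.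
Definition KK N := cos (hh N).
Definition ss N := sin (hh N).
Definition psi N (m : nat) := INR m * th N - hh N.
Definition Apt N m : point := (sin (psi N m), cos (psi N m) - KK N).
Definition Bpt N m : point := (sin (psi N m), KK N - cos (psi N m)).
Definition qpt N : point := (-3 * ss N, 0).
Definition dd N (k : nat) := sqrt (2 - 2 * cos (INR k * th N)).

Lemma INR_addn a b : INR (a + b)%N = INR a + INR b.
Proof. exact: plus_INR. Qed.

Lemma N3R N : (3 <= N)%N -> 3 <= INR N.
Proof. move=> h. have : (3 <= N)%coq_nat by apply/leP. move/le_INR. simpl. lra. Qed.

Lemma hh_bounds N : (3 <= N)%N -> 0 < hh N /\ hh N < PI / 2.
Proof.
move=> /N3R h3; have pi := PI_RGT_0; rewrite /hh; split.
  apply: Rdiv_lt_0_compat; lra.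
apply (Rmult_lt_reg_r (INR N)); first lra.
field_simplify; try lra. nra.
Qed.

Lemma KK_pos N : (3 <= N)%N -> 0 < KK N.
Proof. move=> /hh_bounds [h1 h2]; apply: cos_gt_0; lra. Qed.

Lemma ss_pos N : (3 <= N)%N -> 0 < ss N.
Proof. move=> /hh_bounds [h1 h2]; apply: sin_gt_0; lra. Qed.

Lemma th_hh N : (3 <= N)%N -> th N = 2 * hh N.
Proof. move=> /N3R h; rewrite /th /hh; field; lra. Qed.

Lemma dist2E p q : dist2 p q = sqrt (Rsqr (fst p - fst q) + Rsqr (snd p - snd q)).
Proof. reflexivity. Qed.

Lemma dist2_sym p q : dist2 p q = dist2 q p.
Proof. rewrite !dist2E; f_equal; unfold Rsqr; ring. Qed.

Lemma sq_trig a b : (sin a - sin b)² + (cos a - cos b)² = 2 - 2 * cos (a - b).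
Proof.
rewrite cos_minus. have h1 := sin2_cos2 a. have h2 := sin2_cos2 b.
unfold Rsqr in *. nra.
Qed.

Lemma distA N i j : dist2 (Apt N i) (Apt N j) = sqrt (2 - 2 * cos (psi N i - psi N j)).
Proof. rewrite !dist2E /= -sq_trig; f_equal; f_equal; f_equal; ring. Qed.

Lemma distB N i j : dist2 (Bpt N i) (Bpt N j) = sqrt (2 - 2 * cos (psi N i - psi N j)).
Proof. rewrite !dist2E /= -sq_trig; f_equal; rewrite (Rsqr_neg (cos _ - cos _)); f_equal; f_equal; ring. Qed.

Lemma cos_lt1 x : 0 < x -> x < 2 * PI -> cos x < 1.
Proof.
move=> h1 h2. have -> : x = 2 * (x / 2) by field.
rewrite cos_2a_sin. have : 0 < sin (x / 2) by apply: sin_gt_0; lra. nra.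
Qed.

Lemma psi_diff N i j : psi N i - psi N j = (INR i - INR j) * th N.
Proof. rewrite /psi; ring. Qed.

Lemma NthR N : (3 <= N)%N -> INR N * th N = 2 * PI.
Proof. move=> /N3R h; rewrite /th; field; lra. Qed.

Lemma cos_sg1 N m k : (m + k < N)%N ->
  cos (psi N m - psi N (m + k)) = cos (INR k * th N).
Proof. move=> _; rewrite psi_diff INR_addn -cos_neg; f_equal; ring. Qed.

Lemma cos_sg2 N m k : (3 <= N)%N -> (N <= m + k)%N ->
  cos (psi N m - psi N (m + k - N)) = cos (INR k * th N).
Proof.
move=> h3 h. have e : (m + k - N + N = m + k)%N by rewrite subnK.
have e2 : INR (m + k - N) = INR m + INR k - INR N.
  have := f_equal INR e; rewrite !INR_addn; lra.
rewrite psi_diff e2.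
have -> : (INR m - (INR m + INR k - INR N)) * th N = INR N * th N - INR k * th N by ring.
rewrite NthR // cos_minus cos_2PI sin_2PI; ring.
Qed.

Lemma th_pos N : (3 <= N)%N -> 0 < th N.
Proof. move=> h; rewrite th_hh //; have := hh_bounds h; lra. Qed.

Lemma kth_le N k : (3 <= N)%N -> (k.*2 <= N)%N -> INR k * th N <= PI.
Proof.
move=> h3 hk. have hN := N3R h3. have pi := PI_RGT_0.
have : (k.*2 <= N)%coq_nat by apply/leP.
move/le_INR; rewrite -addnn INR_addn => hk2.
rewrite /th; apply (Rmult_le_reg_r (INR N)); first lra.
field_simplify; try lra. nra.
Qed.

Lemma cos_ne1 N i j : (3 <= N)%N -> (i < N)%N -> (j < N)%N -> i <> j ->
  cos ((INR i - INR j) * th N) < 1.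
Proof.
move=> h3 hi hj hij. have ht := th_pos h3. have hN := NthR h3.
have key : forall a b, (a < b)%N -> (b < N)%N -> cos ((INR b - INR a) * th N) < 1.
  move=> a b hab hb. apply: cos_lt1.
    have : (a < b)%coq_nat by apply/ltP.
    move/lt_INR => ?. nra.
  have : (b < N)%coq_nat by apply/ltP.
  move/lt_INR => ?. have := pos_INR a. nra.
case: (ltngtP i j) => h.
- have -> : (INR i - INR j) * th N = - ((INR j - INR i) * th N) by ring.
  rewrite cos_neg; exact: key.
- exact: key.
- by [].
Qed.

Lemma psi0 N : psi N 0 = - hh N.
Proof. rewrite /psi /=; ring. Qed.
Lemma psi1 N : (3 <= N)%N -> psi N 1 = hh N.
Proof. move=> h; rewrite /psi (th_hh h) /=; ring. Qed.

Lemma A0E N : Apt N 0 = (- ss N, 0).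
Proof. rewrite /Apt psi0 sin_neg cos_neg /KK /ss; f_equal; ring. Qed.
Lemma A1E N : (3 <= N)%N -> Apt N 1 = (ss N, 0).
Proof. move=> h; rewrite /Apt psi1 // /KK /ss; f_equal; ring. Qed.
Lemma A0B0 N : Apt N 0 = Bpt N 0.
Proof. rewrite /Apt /Bpt psi0 cos_neg /KK; f_equal; ring. Qed.
Lemma A1B1 N : (3 <= N)%N -> Apt N 1 = Bpt N 1.
Proof. move=> h; rewrite /Apt /Bpt psi1 // /KK; f_equal; ring. Qed.

Lemma A_inj N i j : (3 <= N)%N -> (i < N)%N -> (j < N)%N -> Apt N i = Apt N j -> i = j.
Proof.
move=> h3 hi hj [e1 e2].
case: (eqVneq i j) => // hij; exfalso.
have := cos_ne1 h3 hi hj (elimN eqP hij).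
rewrite -psi_diff cos_minus e1.
have -> : cos (psi N i) = cos (psi N j) by lra.
have := sin2_cos2 (psi N j); unfold Rsqr; lra.
Qed.

Lemma B_inj N i j : (3 <= N)%N -> (i < N)%N -> (j < N)%N -> Bpt N i = Bpt N j -> i = j.
Proof.
move=> h3 hi hj [e1 e2]; apply: (A_inj h3 hi hj).
rewrite /Apt e1; f_equal; lra.
Qed.

Lemma AB_disj N i j : (3 <= N)%N -> (i < N)%N -> (j < N)%N -> (2 <= j)%N ->
  Apt N i <> Bpt N j.
Proof.
move=> h3 hi hj h2 [e1 e2].
have hK := KK_pos h3. have hs := ss_pos h3.
have c1 := sin2_cos2 (psi N i). have c2 := sin2_cos2 (psi N j).
have c3 := sin2_cos2 (hh N). rewrite -/(KK N) -/(ss N) in c3.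
unfold Rsqr in *.
have ec : cos (psi N i) = cos (psi N j).
  have : (cos (psi N i) - cos (psi N j)) * (cos (psi N i) + cos (psi N j)) = 0.
    rewrite e1 in c1. nra.
  case/Rmult_integral => h; lra.
have eij : i = j by apply: (A_inj h3 hi hj); rewrite /Apt e1 ec.
subst i.
have eK : cos (psi N j) = KK N by lra.
have : (sin (psi N j) - ss N) * (sin (psi N j) + ss N) = 0 by rewrite eK in c2; nra.
case/Rmult_integral => h.
- have : j = 1%N.
    apply: (A_inj h3 hj) => //; first exact: leq_ltn_trans h3.
    rewrite A1E // /Apt eK; f_equal; lra.
  by move=> ej; rewrite ej in h2.
- have : j = 0%N.
    apply: (A_inj h3 hj) => //; first exact: leq_ltn_trans h3.
    rewrite A0E // /Apt eK; f_equal; lra.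
  by move=> ej; rewrite ej in h2.
Qed.

Lemma qA N i : (3 <= N)%N -> qpt N <> Apt N i.
Proof.
move=> h3 [e1 e2]. have hs := ss_pos h3.
have c1 := sin2_cos2 (psi N i). have c3 := sin2_cos2 (hh N). rewrite -/(KK N) -/(ss N) in c3.
unfold Rsqr in *. have eK : cos (psi N i) = KK N by lra.
rewrite -e1 eK in c1. nra.
Qed.

Lemma qB N i : (3 <= N)%N -> qpt N <> Bpt N i.
Proof.
move=> h3 [e1 e2]. have hs := ss_pos h3.
have c1 := sin2_cos2 (psi N i). have c3 := sin2_cos2 (hh N). rewrite -/(KK N) -/(ss N) in c3.
unfold Rsqr in *. have eK : cos (psi N i) = KK N by lra.
rewrite -e1 eK in c1. nra.
Qed.

Lemma dist_qA0 N : (3 <= N)%N -> dist2 (Apt N 0) (qpt N) = dd N 1.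
Proof.
move=> h3. rewrite dist2E A0E /qpt /dd (th_hh h3).
have -> : INR 1 * (2 * hh N) = 2 * hh N by simpl; ring.
rewrite cos_2a_sin -/(ss N) /=.
f_equal; unfold Rsqr; ring.
Qed.

Lemma dd_inj N a b : (3 <= N)%N -> (a.*2 <= N)%N -> (b.*2 <= N)%N -> dd N a = dd N b -> a = b.
Proof.
move=> h3 ha hb e. have ht := th_pos h3.
have pa := pos_INR a. have pb := pos_INR b.
have la := kth_le h3 ha. have lb := kth_le h3 hb.
have ca := COS_bound (INR a * th N). have cb := COS_bound (INR b * th N).
move/sqrt_inj: e => e.
have : INR a * th N = INR b * th N.
  apply: cos_inj; try (split; nra). lra.
have : 0 < th N by [].
move=> _ e2. apply: INR_eq. nra.
Qed.

Lemma dd_pos N a : (3 <= N)%N -> (0 < a)%N -> (a.*2 <= N)%N -> 0 < dd N a.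
Proof.
move=> h3 ha hb. have ht := th_pos h3. have la := kth_le h3 hb. have pi := PI_RGT_0.
apply: sqrt_lt_R0.
have : 0 < INR a by apply: lt_0_INR; apply/ltP.
move=> hpa. have := cos_lt1 (x := INR a * th N). nra.
Qed.

Local Close Scope R_scope.
Set Implicit Arguments.
Unset Strict Implicit.

Definition sg N k m := if (m + k < N)%N then (m + k)%N else (m + k - N)%N.
Definition gB N m := if (m < 2)%N then m else (m + N - 2)%N.
Definition Pt N (g : nat) : point :=
  if (g < N)%N then Apt N g else if (g < N.*2 - 2)%N then Bpt N (g + 2 - N) else qpt N.
Definition U N k t : nat * nat :=
  if (t < N)%N then (t, sg N k t)
  else if (t < N.*2 - 1)%N then (gB N (t - N + 1), gB N (sg N k (t - N + 1)))
  else if k == 1%N then (0%N, (N.*2 - 2)%N) else (gB N 0, gB N (sg N k 0)).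

Lemma sg_spec N k m : ((m + k < N)%N /\ sg N k m = (m + k)%N) \/ ((N <= m + k)%N /\ sg N k m = (m + k - N)%N).
Proof. rewrite /sg; case: ifP => h; [left|right]; split => //; lia. Qed.

Lemma gB_spec N m : ((m < 2)%N /\ gB N m = m) \/ ((2 <= m)%N /\ gB N m = (m + N - 2)%N).
Proof. rewrite /gB; case: ifP => h; [left|right]; split => //; lia. Qed.

Lemma Pt_A N m : (m < N)%N -> Pt N m = Apt N m.
Proof. by rewrite /Pt => ->. Qed.

Lemma Pt_gB N m : (3 <= N)%N -> (m < N)%N -> Pt N (gB N m) = Bpt N m.
Proof.
move=> h3 hm; rewrite /gB; case: ifP => h2.
  rewrite Pt_A; last by lia.
  case: m h2 hm => [|[|m]] //= _ _; [exact: A0B0 | exact: A1B1].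
rewrite /Pt ifF; last by lia.
rewrite ifT; last by lia.
congr Bpt; lia.
Qed.

Lemma Pt_q N : (3 <= N)%N -> Pt N (N.*2 - 2) = qpt N.
Proof. move=> h3; rewrite /Pt ifF; last by lia. by rewrite ifF //; lia. Qed.

Lemma sg_lt N k m : (m < N)%N -> (k < N)%N -> (sg N k m < N)%N.
Proof. rewrite /sg; case: ifP; lia. Qed.

Lemma dist_sg_A N k m : (3 <= N)%N -> (0 < k)%N -> (k < N)%N -> (m < N)%N ->
  dist2 (Apt N m) (Apt N (sg N k m)) = dd N k.
Proof.
move=> h3 hk hkN hm; rewrite distA /dd /sg; case: ifP => h.
  by rewrite cos_sg1.
by rewrite cos_sg2 //; lia.
Qed.

Lemma dist_sg_B N k m : (3 <= N)%N -> (0 < k)%N -> (k < N)%N -> (m < N)%N ->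
  dist2 (Bpt N m) (Bpt N (sg N k m)) = dd N k.
Proof.
move=> h3 hk hkN hm; rewrite distB /dd /sg; case: ifP => h.
  by rewrite cos_sg1.
by rewrite cos_sg2 //; lia.
Qed.

Lemma U_valid N k e t : (3 <= N)%N -> (0 < k)%N -> (k.*2 < N)%N -> (e <= 1)%N ->
  (t < N.*2 - 1 + e)%N ->
  [/\ (U N k t).1 != (U N k t).2, ((U N k t).1 < N.*2 - 2 + e)%N,
      ((U N k t).2 < N.*2 - 2 + e)%N &
      dist2 (Pt N (U N k t).1) (Pt N (U N k t).2) = dd N k].
Proof.
move=> h3 hk hkN he ht.
have hkN' : (k < N)%N by lia.
rewrite /U; case: ifP => h1.
  have hs := sg_lt h1 hkN'.
  split => /=.
  - move: hs; rewrite /sg; case: ifP => ? ?; apply/eqP; lia.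
  - lia.
  - lia.
  - by rewrite !Pt_A // dist_sg_A.
case: ifP => h2.
  have hm : (t - N + 1 < N)%N by lia.
  have hs := sg_lt hm hkN'.
  split => /=.
  - have := sg_spec N k (t - N + 1); have := gB_spec N (t - N + 1);
    have := gB_spec N (sg N k (t - N + 1)); move=> *; apply/eqP; lia.
  - rewrite /gB; case: ifP; lia.
  - move: hs; rewrite /gB; case: ifP; lia.
  - by rewrite !Pt_gB // dist_sg_B.
have et : e = 1%N by lia.
case: (boolP (k == 1%N)) => hk1.
  split => /=.
  - apply/eqP; lia.
  - lia.
  - lia.
  - move/eqP: hk1 => ->; rewrite Pt_A ?Pt_q ?dist_qA0 //; lia.
have hm : (0 < N)%N by lia.
move/eqP: hk1 => hk1.
have hs := sg_lt hm hkN'.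
have := sg_spec N k 0; have := gB_spec N 0; have := gB_spec N (sg N k 0).
move=> g1 g2 g3.
split => /=.
- apply/eqP; lia.
- lia.
- lia.
- by rewrite !Pt_gB // dist_sg_B.
Qed.

Lemma U_spec N k t : (t < N.*2)%N ->
  ((t < N)%N /\ (U N k t).1 = t /\ (U N k t).2 = sg N k t) \/
  ((N <= t < N.*2 - 1)%N /\ (U N k t).1 = gB N (t - N + 1) /\ (U N k t).2 = gB N (sg N k (t - N + 1))) \/
  (t = N.*2 - 1 /\ k = 1 /\ (U N k t).1 = 0 /\ (U N k t).2 = N.*2 - 2)%N \/
  (t = N.*2 - 1 /\ k <> 1 /\ (U N k t).1 = gB N 0 /\ (U N k t).2 = gB N (sg N k 0))%N.
Proof.
move=> ht; rewrite /U; case: ifP => h1; first by left.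
case: ifP => h2; first by right; left; split => //; lia.
right; right; case: (boolP (k == 1%N)) => /eqP hk; [left|right]; split => //; lia.
Qed.

Lemma ueq_of a b c d : minn a b = minn c d -> maxn a b = maxn c d ->
  (a = c /\ b = d) \/ (a = d /\ b = c).
Proof. lia. Qed.

Lemma pair_inj N k m1 m2 : (0 < k)%N -> (k.*2 < N)%N -> (m1 < N)%N -> (m2 < N)%N ->
  (m1 = m2 /\ sg N k m1 = sg N k m2) \/ (m1 = sg N k m2 /\ sg N k m1 = m2) -> m1 = m2.
Proof.
move=> hk hkN h1 h2.
have := sg_spec N k m1; have := sg_spec N k m2.
move: (sg N k m1) (sg N k m2) => s1 s2. lia.
Qed.

Lemma gB_inj N x y : (x < N)%N -> (y < N)%N -> gB N x = gB N y -> x = y.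
Proof. have := gB_spec N x; have := gB_spec N y; move: (gB N x) (gB N y); lia. Qed.

Lemma gB_lt N x : (3 <= N)%N -> (x < N)%N -> (gB N x < N.*2 - 2)%N.
Proof. have := gB_spec N x; move: (gB N x); lia. Qed.

Lemma Bmax N k m : (3 <= N)%N -> (0 < k)%N -> (k.*2 < N)%N -> (m < N)%N -> ~ (m = 0 /\ k = 1)%N ->
  (N <= maxn (gB N m) (gB N (sg N k m)))%N.
Proof.
move=> h3 hk hkN hm hn.
have := sg_spec N k m; have := gB_spec N m; have := gB_spec N (sg N k m).
move: (sg N k m) (gB N m) (gB N (sg N k m)) => s g1 g2 /=. 
case=> [[? e1]|[? e1]]; case=> [[? e2]|[? e2]]; case=> [[? e3]|[? e3]]; lia.
Qed.

Lemma Bpair_inj N k m1 m2 : (3 <= N)%N -> (0 < k)%N -> (k.*2 < N)%N -> (m1 < N)%N -> (m2 < N)%N ->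
  minn (gB N m1) (gB N (sg N k m1)) = minn (gB N m2) (gB N (sg N k m2)) ->
  maxn (gB N m1) (gB N (sg N k m1)) = maxn (gB N m2) (gB N (sg N k m2)) -> m1 = m2.
Proof.
move=> h3 hk hkN h1 h2 e1 e2.
have hkN' : (k < N)%N by lia.
have s1 := sg_lt h1 hkN'. have s2 := sg_lt h2 hkN'.
apply: (pair_inj hk hkN h1 h2).
case: (ueq_of e1 e2) => [[a b]|[a b]]; [left|right]; split; apply: gB_inj; eauto.
Qed.

Lemma U_inj N k t1 t2 : (3 <= N)%N -> (0 < k)%N -> (k.*2 < N)%N ->
  (t1 < N.*2)%N -> (t2 < N.*2)%N ->
  minn (U N k t1).1 (U N k t1).2 = minn (U N k t2).1 (U N k t2).2 ->
  maxn (U N k t1).1 (U N k t1).2 = maxn (U N k t2).1 (U N k t2).2 -> t1 = t2.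
Proof.
move=> h3 hk hkN ht1 ht2.
have hkN' : (k < N)%N by lia.
have cls : forall t, (t < N.*2)%N ->
  [\/ (t < N)%N /\ (maxn (U N k t).1 (U N k t).2 < N)%N,
      (N <= t)%N /\ (N <= maxn (U N k t).1 (U N k t).2 < N.*2 - 2)%N /\
        exists2 m, (m < N)%N & ((t = N.*2 - 1 /\ m = 0) \/ (t < N.*2 - 1 /\ m = t - N + 1))%N /\
          (U N k t) = (gB N m, gB N (sg N k m)) |
      t = (N.*2 - 1)%N /\ maxn (U N k t).1 (U N k t).2 = (N.*2 - 2)%N].
  move=> t ht. rewrite /U. case: ifP => h1.
    apply: Or31; split => //=. have := sg_lt h1 hkN'. lia.
  case: ifP => h2.
    have hm : (t - N + 1 < N)%N by lia.
    apply: Or32; split; first lia. split.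
      have := Bmax h3 hk hkN hm. have := gB_lt h3 hm. have := gB_lt h3 (sg_lt hm hkN').
      move=> a b c. rewrite /=. have : ~ (t - N + 1 = 0 /\ k = 1)%N by lia. move/c. lia.
    by exists (t - N + 1)%N => //; split => //; right; lia.
  case: (boolP (k == 1%N)) => /eqP hk1.
    apply: Or33; split => /=; lia.
  have hm : (0 < N)%N by lia.
  apply: Or32; split; first lia. split.
    have := Bmax h3 hk hkN hm. have := gB_lt h3 hm. have := gB_lt h3 (sg_lt hm hkN').
    move=> a b c. rewrite /=. have : ~ (0 = 0 /\ k = 1)%N by lia. move/c. lia.
  by exists 0%N => //; split => //; left; lia.
move=> e1 e2.
case: (cls _ ht1) => [[a1 b1]|[a1 [b1 [m1 c1 [d1 f1]]]]|[a1 b1]];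
case: (cls _ ht2) => [[a2 b2]|[a2 [b2 [m2 c2 [d2 f2]]]]|[a2 b2]]; try lia.
- move: e1 e2; rewrite /U a1 a2 /= => e1 e2.
  apply: (pair_inj hk hkN a1 a2). case: (ueq_of e1 e2) => [[]|[]]; auto.
- move: e1 e2; rewrite f1 f2 /= => e1 e2.
  have := Bpair_inj h3 hk hkN c1 c2 e1 e2. lia.
Qed.

Lemma Pt_cases N g : ((g < N)%N /\ Pt N g = Apt N g) \/
  ((N <= g < N.*2 - 2)%N /\ Pt N g = Bpt N (g + 2 - N)) \/ ((N.*2 - 2 <= g)%N /\ Pt N g = qpt N).
Proof.
rewrite /Pt; case: ifP => h1; first by left.
case: ifP => h2; [right; left|right; right]; split => //; lia.
Qed.

Lemma Pt_inj N e a b : (3 <= N)%N -> (e <= 1)%N -> (a < N.*2 - 2 + e)%N -> (b < N.*2 - 2 + e)%N ->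
  Pt N a = Pt N b -> a = b.
Proof.
move=> h3 he ha hb.
case: (Pt_cases N a) => [[a1 ->]|[[a1 ->]|[a1 ->]]];
case: (Pt_cases N b) => [[b1 ->]|[[b1 ->]|[b1 ->]]] => E.
- exact: (A_inj h3 a1 b1 E).
- exfalso; apply: (@AB_disj N a (b + 2 - N)); [done|done|lia|lia|exact E].
- exfalso; apply: (@qA N a h3); by rewrite E.
- exfalso; apply: (@AB_disj N b (a + 2 - N)); [done|done|lia|lia|by rewrite E].
- have := B_inj h3 _ _ E. lia.
- exfalso; apply: (@qB N (a + 2 - N) h3); by rewrite E.
- exfalso; apply: (@qA N b h3); exact E.
- exfalso; apply: (@qB N (b + 2 - N) h3); exact E.
- lia.
Qed.

Lemma dist_minmax N a b : dist2 (Pt N (minn a b)) (Pt N (maxn a b)) = dist2 (Pt N a) (Pt N b).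
Proof.
case: (leqP a b) => h.
  by [].
by rewrite dist2_sym.
Qed.

Unset Implicit Arguments.
Set Strict Implicit.

Theorem theorem1 :
  forall n : nat, (0 < n)%N ->
  exists (P : 'I_n -> point) (d : 'I_(n %/ 4) -> R),
    injective P /\ injective d /\
    (forall j, Rlt 0 (d j)) /\
    (forall j, (n.+1 <= occ P (d j))%N).
Proof.
move=> n hn.
case: (ltnP n 4) => h4.
  have n0 : (n %/ 4 = 0)%N by lia.
  have absd : forall j : 'I_(n %/ 4), False.
    by move=> j; have := ltn_ord j; lia.
  exists (fun i : 'I_n => (INR i, INR 0)), (fun _ => INR 1).
  split; last split; last split.
  - move=> x y [E]. apply: val_inj. exact: INR_eq.
  - by move=> x; case: (absd x).
  - by move=> x; case: (absd x).
  - by move=> x; case: (absd x).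
pose N := (n %/ 2 + 1)%N. pose e := (n %% 2)%N.
have h3 : (3 <= N)%N by rewrite /N; lia.
have he : (e <= 1)%N by rewrite /e; lia.
have hnE : n = (N.*2 - 2 + e)%N by rewrite /N /e; lia.
exists (fun i : 'I_n => Pt N i), (fun j : 'I_(n %/ 4) => dd N j.+1).
have hk : forall j : 'I_(n %/ 4), (j.+1.*2 < N)%N.
  move=> j; have := ltn_ord j; rewrite /N; lia.
split; last split; last split.
- move=> x y E. apply: val_inj. apply: (@Pt_inj N e x y h3 he); [rewrite -hnE // | rewrite -hnE // | exact E].
- move=> x y E. apply: val_inj.
  have := dd_inj h3 (ltnW (hk x)) (ltnW (hk y)) E. by case.
- move=> j. apply: dd_pos => //. exact: ltnW (hk j).
- move=> j. set k := j.+1.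
  have hkN := hk j. have hk0 : (0 < k)%N by [].
  pose F (t : 'I_n.+1) : 'I_n * 'I_n :=
    (Ordinal (ltn_pmod (minn (U N k t).1 (U N k t).2) hn),
     Ordinal (ltn_pmod (maxn (U N k t).1 (U N k t).2) hn)).
  have tb : forall t : 'I_n.+1, (t < N.*2 - 1 + e)%N.
    move=> t; have := ltn_ord t; lia.
  have Fval : forall t : 'I_n.+1,
      [/\ val (F t).1 = minn (U N k t).1 (U N k t).2,
          val (F t).2 = maxn (U N k t).1 (U N k t).2,
          (U N k t).1 != (U N k t).2 &
          dist2 (Pt N (U N k t).1) (Pt N (U N k t).2) = dd N k].
    move=> t. have [v1 v2 v3 v4] := U_valid h3 hk0 hkN he (tb t).
    rewrite /F /= !modn_small; try lia. by split.
  have Finj : injective F.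
    move=> t1 t2 E. apply: val_inj.
    have [a1 b1 _ _] := Fval t1. have [a2 b2 _ _] := Fval t2.
    apply: (@U_inj N k (nat_of_ord t1) (nat_of_ord t2) h3 hk0 hkN).
    + have := tb t1; lia.
    + have := tb t2; lia.
    + by rewrite -a1 -a2 E.
    + by rewrite -b1 -b2 E.
  rewrite /occ.
  have -> : n.+1 = #|F @: [set: 'I_n.+1]| by rewrite card_imset // cardsT card_ord.
  apply: subset_leq_card. apply/subsetP => p /imsetP [t _ ->].
  rewrite inE. have [a1 b1 c1 d1] := Fval t. rewrite a1 b1.
  apply/andP; split.
    move: c1 => /eqP; lia.
  apply/eqP. by rewrite -d1 -(dist_minmax N (U N k t).1).
Qed.
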